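(* Fix $\epsilon>0$, a unitary $2\times2$ operator $R$ with $\det R=1$, and a Clifford+$T$ operator $U$. The following are equivalent: (1) there exists a unit scalar $\lambda$ such that $\|R-\lambda U\|\le\epsilon$; (2) there exists $n\in\mathbb Z$ such that $\|R-e^{in\pi/8}U\|\le\epsilon$.
   Context: Let $\omega=e^{i\pi/4}$, $H=\frac{1}{\sqrt2}\begin{bmatrix}1&1\\1&-1\end{bmatrix}$, $S=\begin{bmatrix}1&0\\0&i\end{bmatrix}$, $T=\begin{bmatrix}1&0\\0&\omega\end{bmatrix}$. A Clifford+$T$ operator is an element of the group generated by $\omega I$, $H$, $S$, $T$. $\|\cdot\|$ denotes the operator norm on $2\times2$ complex matrices. *)

(* Defs.v *)
From HB Require Import structures.
From mathcomp Require Import all_boot all_order all_algebra.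
From mathcomp Require Import complex.
From mathcomp Require Import classical_sets reals trigo.
Set Implicit Arguments. Unset Strict Implicit. Unset Printing Implicit Defensive.
Import Order.TTheory GRing.Theory Num.Theory.
Local Open Scope ring_scope.
Local Open Scope classical_set_scope.

Section Defs.
Variable R : realType.

Definition expi (x : R) : R[i] := (cos x +i* sin x)%C.

Definition vnorm (v : 'cV[R[i]]_2) : R :=
  Num.sqrt (\sum_(k < 2) Normc.normc (v k 0) ^+ 2).

Definition opnorm (A : 'M[R[i]]_2) : R :=
  sup [set vnorm (A *m v) | v in [set v | vnorm v = 1]].

Definition adjoint (A : 'M[R[i]]_2) : 'M[R[i]]_2 := (map_mx conjc A)^T.
Definition unitary (A : 'M[R[i]]_2) : Prop := A *m adjoint A = 1%:M.

Definition omega : R[i] := expi (pi / 4).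

Definition Hgate : 'M[R[i]]_2 :=
  ((Num.sqrt 2)^-1)%:C%C *:
    \matrix_(i < 2, j < 2) (if (i == 1 :> nat) && (j == 1 :> nat) then -1 else 1).

Definition Sgate : 'M[R[i]]_2 :=
  \matrix_(i < 2, j < 2)
    (if i == j then (if i == 0 :> nat then 1 else 'i%C) else 0).

Definition Tgate : 'M[R[i]]_2 :=
  \matrix_(i < 2, j < 2)
    (if i == j then (if i == 0 :> nat then 1 else omega) else 0).

Inductive clifford_T : 'M[R[i]]_2 -> Prop :=
  | cT_omega : clifford_T (omega%:M)
  | cT_H : clifford_T Hgate
  | cT_S : clifford_T Sgate
  | cT_T : clifford_T Tgate
  | cT_one : clifford_T 1%:M
  | cT_mul A B : clifford_T A -> clifford_T B -> clifford_T (A *m B)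
  | cT_inv A : clifford_T A -> clifford_T (invmx A).

End Defs.

(* Main.v *)
Require Import Defs.
From HB Require Import structures.
From mathcomp Require Import all_boot all_order all_algebra.
From mathcomp Require Import complex.
From mathcomp Require Import classical_sets reals trigo.
From mathcomp Require Import ring lra.
Import Order.TTheory GRing.Theory Num.Theory.
Local Open Scope ring_scope.
Local Open Scope complex_scope.

Section S.
Variable R : realType.
Local Notation C := R[i].

Lemma ord2_cases (i : 'I_2) : i = 0 \/ i = 1.
Proof. case: i => [[|[|//]] Hi]; [left|right]; exact/val_inj. Qed.

Lemma mul2E n (A : 'M[C]_2) (B : 'M[C]_(2, n)) i j : (A *m B) i j = A i 0 * B 0 j + A i 1 * B 1 j.
Proof.
rewrite mxE !big_ord_recl big_ord0 addr0.
have -> : lift ord0 ord0 = 1 :> 'I_2 by apply/val_inj.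
by [].
Qed.

Lemma adjE (A : 'M[C]_2) i j : adjoint A i j = (A j i)^*%C.
Proof. by rewrite /adjoint !mxE. Qed.

Lemma unitaryE (A : 'M[C]_2) : unitary A <->
  [/\ A 0 0 * (A 0 0)^*%C + A 0 1 * (A 0 1)^*%C = 1,
      A 0 0 * (A 1 0)^*%C + A 0 1 * (A 1 1)^*%C = 0,
      A 1 0 * (A 0 0)^*%C + A 1 1 * (A 0 1)^*%C = 0 &
      A 1 0 * (A 1 0)^*%C + A 1 1 * (A 1 1)^*%C = 1].
Proof.
rewrite /unitary; split.
  move/matrixP => h.
  have := h 0 0; have := h 0 1; have := h 1 0; have := h 1 1.
  by rewrite !mul2E !adjE !mxE /= => -> -> -> ->.
case=> h1 h2 h3 h4; apply/matrixP => i j; rewrite mul2E !adjE !mxE.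
by case: (ord2_cases i) => ->; case: (ord2_cases j) => -> /=.
Qed.

Lemma expiD (x y : R) : expi x * expi y = expi (x + y).
Proof. rewrite /expi cosD sinD /=. simpc. congr (_ +i* _); ring. Qed.

Lemma expi0 : expi (0:R) = 1.
Proof. by rewrite /expi cos0 sin0. Qed.

Lemma expiN (x : R) : expi (- x) = (expi x)^-1.
Proof.
apply: (@mulIf _ (expi x)).
  apply/eqP => h. have := cos2Dsin2 x. move: h; rewrite /expi => -[-> ->]. 
  by rewrite expr0n /= addr0 => /eqP; rewrite eq_sym oner_eq0.
rewrite expiD addNr expi0 mulVf //.
apply/eqP => h. have := cos2Dsin2 x. move: h; rewrite /expi => -[-> ->].
by rewrite expr0n /= addr0 => /eqP; rewrite eq_sym oner_eq0.
Qed.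

Lemma expi_pi : expi (pi : R) = -1.
Proof. rewrite /expi cospi sinpi; apply/eqP; rewrite eq_complex /= oppr0 !eqxx. done. Qed.

Lemma expi_conj (x : R) : (expi x)^*%C%C * expi x = 1.
Proof. rewrite /expi /=. simpc. have h := cos2Dsin2 x. rewrite -[1]/(1 +i* 0). congr (_ +i* _); [rewrite -h|]; ring. Qed.

Lemma expi_norm (x : R) : `|expi x| = 1.
Proof. by rewrite normc_def /= cos2Dsin2 sqrtr1. Qed.


Lemma if_f (T : Type) (x y : T) : (if false then x else y) = y. Proof. by []. Qed.
Lemma if_t (T : Type) (x y : T) : (if true then x else y) = x. Proof. by []. Qed.

Lemma cM (x y : C) : (x*y)^*%C = x^*%C * y^*%C. Proof. exact: rmorphM. Qed.
Lemma cD (x y : C) : (x+y)^*%C = x^*%C + y^*%C. Proof. exact: rmorphD. Qed.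
Lemma cB (x y : C) : (x-y)^*%C = x^*%C - y^*%C. Proof. exact: rmorphB. Qed.
Lemma cN (x : C) : (-x)^*%C = - x^*%C. Proof. exact: rmorphN. Qed.
Lemma c1 : (1 : C)^*%C = 1. Proof. exact: rmorph1. Qed.
Lemma c0 : (0 : C)^*%C = 0. Proof. exact: rmorph0. Qed.
Lemma cK (x : C) : (x^*%C)^*%C = x. Proof. exact: conjcK. Qed.

Lemma mulcJ (x : C) : x * x^*%C = ((complex.Re x) ^+2 + (complex.Im x) ^+2)%:C.
Proof. case: x => a b /=; simpc. apply/eqP; rewrite eq_complex /=; apply/andP; split; apply/eqP; ring. Qed.

Lemma conjC1 (a : C) : a^*%C * a = 1 -> a * a^*%C = 1.
Proof. by rewrite mulrC. Qed.

Lemma unitary_scalar (a : C) : a * a^*%C = 1 -> unitary (a%:M).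
Proof.
move=> h; have n01 : (0 == 1 :> 'I_2) = false by [].
have n10 : (1 == 0 :> 'I_2) = false by [].
apply/unitaryE; rewrite !mxE !eqxx n01 n10 !mulr1n !mulr0n !mul0r !conjc0 !mulr0 !addr0 !add0r.
by split.
Qed.

Lemma sqrt2_inv2 : (((Num.sqrt (2:R))^-1)%:C * ((Num.sqrt (2:R))^-1)%:C : C) = 2^-1.
Proof.
rewrite -rmorphM /= -expr2 exprVn sqr_sqrtr ?ler0n // fmorphV /=.
by rewrite rmorphMn rmorph1.
Qed.

Lemma unitary_H : unitary (Hgate R).
Proof.
have e0 : ((0:'I_2) == 1 :> nat) = false by [].
have e1 : ((1:'I_2) == 1 :> nat) = true by [].
apply/unitaryE; rewrite /Hgate !mxE !e0 !e1 !andFb !andTb; cbv beta iota.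
set s := real_complex_def _ _.
have hs : (s : C)^*%C = s by rewrite /s /= oppr0.
have hs2 : s * s = 2^-1 by rewrite /s; exact: sqrt2_inv2.
rewrite !cM !cN !c1 hs !mulrN !mulr1 !mulNr !opprK hs2.
have h2 : (2:C) != 0 by rewrite pnatr_eq0.
split; [field=>// | ring | ring | field => //].
Qed.

Lemma unitary_S : unitary (Sgate R).
Proof.
have n01 : (0 == 1 :> 'I_2) = false by [].
have n10 : (1 == 0 :> 'I_2) = false by [].
have e0 : ((0:'I_2) == 0 :> nat) = true by [].
have e1 : ((1:'I_2) == 0 :> nat) = false by [].
apply/unitaryE; rewrite /Sgate !mxE !eqxx n01 n10 ?e0 ?e1; cbv beta iota.
rewrite !c0 !c1 !mulr0 !mul0r !addr0 !add0r !mulr1.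
split => //. by rewrite mulcJ /= expr0n expr1n add0r.
Qed.

Lemma unitary_T : unitary (Tgate R).
Proof.
have n01 : (0 == 1 :> 'I_2) = false by [].
have n10 : (1 == 0 :> 'I_2) = false by [].
have e0 : ((0:'I_2) == 0 :> nat) = true by [].
have e1 : ((1:'I_2) == 0 :> nat) = false by [].
apply/unitaryE; rewrite /Tgate !mxE !eqxx n01 n10 ?e0 ?e1; cbv beta iota.
rewrite !c0 !c1 !mulr0 !mul0r !addr0 !add0r !mulr1.
split => //. by rewrite mulrC expi_conj.
Qed.


Lemma adjM (A B : 'M[C]_2) : adjoint (A *m B) = adjoint B *m adjoint A.
Proof. by rewrite /adjoint map_mxM trmx_mul. Qed.

Lemma adjK (A : 'M[C]_2) : adjoint (adjoint A) = A.
Proof. by apply/matrixP => i j; rewrite !adjE cK. Qed.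

Lemma unitary_mul (A B : 'M[C]_2) : unitary A -> unitary B -> unitary (A *m B).
Proof.
rewrite /unitary => hA hB.
by rewrite adjM mulmxA -(mulmxA A) hB mulmx1 hA.
Qed.

Lemma unitary_invE (A : 'M[C]_2) : unitary A -> invmx A = adjoint A.
Proof.
rewrite /unitary => hA; have [uA _] := mulmx1_unit hA.
by rewrite -[invmx A]mulmx1 -hA mulmxA mulVmx // mul1mx.
Qed.

Lemma unitary_inv (A : 'M[C]_2) : unitary A -> unitary (invmx A).
Proof.
move=> hA; rewrite unitary_invE // /unitary adjK; exact: mulmx1C.
Qed.

Definition ctP (U : 'M[C]_2) := unitary U /\ exists k : int, \det U = expi (k%:~R * pi / 4).

Lemma det2 (A : 'M[C]_2) : \det A = A 0 0 * A 1 1 - A 0 1 * A 1 0.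
Proof.
rewrite (expand_det_row _ 0) !big_ord_recl big_ord0 /cofactor !det_mx11 !mxE /=.
have -> : lift 0 0 = 1 :> 'I_2 by apply/val_inj.
have -> : lift 1 0 = 0 :> 'I_2 by apply/val_inj.
rewrite /bump /= expr0 expr1. ring.
Qed.

Lemma ctP_gen : forall U, clifford_T U -> ctP U.
Proof.
move=> U; elim.
- split; first by apply: unitary_scalar; rewrite mulrC expi_conj.
  exists 2; rewrite det_scalar expr2 /omega expiD; congr expi.
  rewrite -[(2:int)%:~R]/(2%:R : R); by field.
- split; first exact: unitary_H.
  exists 4; rewrite det2 /Hgate !mxE /=.
  have -> : (4:int)%:~R * pi / 4 = pi :> R by rewrite -[(4:int)%:~R]/(4%:R:R); field.
  rewrite expi_pi.
  set s := real_complex_def _ _.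
  have hs2 : s * s = 2^-1 by rewrite /s; exact: sqrt2_inv2.
  have -> : s * 1 * (s * -1) - s * 1 * (s * 1) = - (2 * (s * s)) by ring.
  by rewrite hs2 mulfV // pnatr_eq0.
- split; first exact: unitary_S.
  exists 2; rewrite det2 /Sgate !mxE /=.
  have -> : (2:int)%:~R * pi / 4 = pi / 2 :> R by rewrite -[(2:int)%:~R]/(2%:R:R); field.
  by rewrite /expi cos_pihalf sin_pihalf mul1r mul0r subr0.
- split; first exact: unitary_T.
  exists 1; rewrite det2 /Tgate !mxE /=.
  have -> : (1:int)%:~R * pi / 4 = pi / 4 :> R by rewrite -[(1:int)%:~R]/(1%:R:R); field.
  by rewrite mul1r mul0r subr0.
- split; first by apply: unitary_scalar; rewrite c1 mulr1.
  by exists 0; rewrite det1 mul0r mul0r expi0.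
- move=> A B _ [uA [k hk]] _ [uB [l hl]]; split; first exact: unitary_mul.
  exists (k + l); rewrite det_mulmx hk hl expiD; congr expi.
  rewrite intrD; ring.
- move=> A _ [uA [k hk]]; split; first exact: unitary_inv.
  exists (- k); rewrite det_inv hk -expiN; congr expi.
  rewrite intrN; ring.
Qed.


Definition n2 (z : C) : R := complex.Re z ^+ 2 + complex.Im z ^+ 2.

Lemma n2_ge0 z : 0 <= n2 z.
Proof. by rewrite /n2 addr_ge0 ?sqr_ge0. Qed.

Lemma n2M (x y : C) : n2 (x * y) = n2 x * n2 y.
Proof. case: x => a b; case: y => c d; rewrite /n2 /=; simpc; rewrite /=; ring. Qed.

Lemma n2J (x : C) : n2 (x^*%C) = n2 x.
Proof. case: x => a b; rewrite /n2 /=; ring. Qed.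

Lemma n2N (x : C) : n2 (- x) = n2 x.
Proof. case: x => a b; rewrite /n2 /=; ring. Qed.

Lemma CS (a b x y : C) : n2 (a * x + b * y) <= (n2 a + n2 b) * (n2 x + n2 y).
Proof.
rewrite -subr_ge0.
have -> : (n2 a + n2 b) * (n2 x + n2 y) - n2 (a * x + b * y) = n2 (a * y^*%C - b * x^*%C).
  case: a => a1 a2; case: b => b1 b2; case: x => x1 x2; case: y => y1 y2.
  rewrite /n2 /=; simpc; rewrite /=; ring.
exact: n2_ge0.
Qed.

Lemma n2_special (x y w1 w2 : C) :
  n2 (x * w1 + - y^*%C * w2) + n2 (y * w1 + x^*%C * w2) = (n2 x + n2 y) * (n2 w1 + n2 w2).
Proof.
case: x => a1 a2; case: y => b1 b2; case: w1 => x1 x2; case: w2 => y1 y2.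
rewrite /n2 /=; simpc; rewrite /=; ring.
Qed.

Lemma I1 (a b p q L : C) :
  n2 (a - L * p) + n2 (b - L * q) =
  n2 a + n2 b + n2 L * (n2 p + n2 q) - 2 * complex.Re (L * (a^*%C * p + b^*%C * q)).
Proof.
case: a => a1 a2; case: b => b1 b2; case: p => x1 x2; case: q => y1 y2; case: L => l1 l2.
rewrite /n2 /=; simpc; rewrite /=; ring.
Qed.

Lemma I2 (a b p q L : C) :
  n2 (- b^*%C + L * q^*%C) + n2 (a^*%C - L * p^*%C) =
  n2 a + n2 b + n2 L * (n2 p + n2 q) - 2 * complex.Re (L * (a * p^*%C + b * q^*%C)).
Proof.
case: a => a1 a2; case: b => b1 b2; case: p => x1 x2; case: q => y1 y2; case: L => l1 l2.
rewrite /n2 /=; simpc; rewrite /=; ring.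
Qed.

Lemma ReRe (z w : C) : complex.Re (z * w) + complex.Re (z * w^*%C) = 2 * complex.Re z * complex.Re w.
Proof. case: z => a b; case: w => c d; rewrite /=; simpc; rewrite /=; ring. Qed.


Lemma ReN (x : C) : complex.Re (- x) = - complex.Re x.
Proof. by case: x. Qed.

Lemma n2_one (x : C) : n2 x = 1 -> x^*%C * x = 1.
Proof. by move=> h; rewrite mulrC mulcJ -/(n2 x) h. Qed.

Lemma Re_le (z : C) : complex.Re z ^+ 2 <= n2 z.
Proof. by rewrite /n2 lerDl sqr_ge0. Qed.

Lemma key (a b p q lam mu0 d : C) :
  n2 a + n2 b = 1 -> n2 p + n2 q = 1 -> n2 lam = 1 -> n2 mu0 = 1 -> mu0 * mu0 * d = 1 ->
  exists2 mu, (mu = mu0 \/ mu = - mu0) &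
   2 * (n2 (a - mu * p) + n2 (b - mu * q)) <=
   (n2 (a - lam * p) + n2 (b - lam * q)) +
   (n2 (- b^*%C + (lam * d) * q^*%C) + n2 (a^*%C - (lam * d) * p^*%C)).
Proof.
move=> hab hpq hl hm hd.
rewrite I2 I1 n2M hab hpq hl.
set s := a^*%C * p + b^*%C * q.
have hs : a * p^*%C + b * q^*%C = s^*%C by rewrite /s cD !cM !cK.
rewrite hs.
have hmm := n2_one mu0 hm.
have dE : d = mu0^*%C * mu0^*%C.
  have : mu0^*%C * mu0^*%C * (mu0 * mu0 * d) = (mu0^*%C * mu0) * (mu0^*%C * mu0) * d by ring.
  by rewrite hd hmm mulr1 !mul1r => <-.
set z := lam * mu0^*%C.
set w := mu0 * s.
have e1 : lam * s = z * w by rewrite /z /w mulrA -(mulrA lam) hmm mulr1.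
have e2 : lam * d * s^*%C = z * w^*%C by rewrite /z /w dE cM !mulrA.
rewrite e1 e2.
have hz : n2 z = 1 by rewrite /z n2M n2J hl hm mulr1.
have hR := ReRe z w.
have hdn : n2 d = 1 by rewrite dE n2M n2J hm mulr1.
have hRz := Re_le z; rewrite hz in hRz.
have [hw|hw] := lerP 0 (complex.Re w).
  exists mu0; first by left.
  rewrite I1 hab hpq hm hdn -/s -/w.
  nra.
exists (- mu0); first by right.
rewrite I1 n2N hab hpq hm hdn -/s mulNr ReN -/w.
nra.
Qed.


Lemma vnormE (v : 'cV[C]_2) : vnorm v = Num.sqrt (n2 (v 0 0) + n2 (v 1 0)).
Proof.
rewrite /vnorm !big_ord_recl big_ord0 addr0.
have -> : lift ord0 ord0 = 1 :> 'I_2 by apply/val_inj.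
have nn : forall z : C, Normc.normc z ^+ 2 = n2 z.
  by case => x y; rewrite /= sqr_sqrtr // addr_ge0 // sqr_ge0.
by rewrite !nn.
Qed.

Lemma vnorm1 (v : 'cV[C]_2) : vnorm v = 1 -> n2 (v 0 0) + n2 (v 1 0) = 1.
Proof.
rewrite vnormE => h.
have hp : 0 <= n2 (v 0 0) + n2 (v 1 0) by rewrite addr_ge0 ?n2_ge0.
by rewrite -(sqr_sqrtr hp) h expr1n.
Qed.

Definition frob (A : 'M[C]_2) := n2 (A 0 0) + n2 (A 0 1) + (n2 (A 1 0) + n2 (A 1 1)).

Lemma bound_frob (A : 'M[C]_2) (w : 'cV[C]_2) :
  n2 ((A *m w) 0 0) + n2 ((A *m w) 1 0) <= frob A * (n2 (w 0 0) + n2 (w 1 0)).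
Proof.
rewrite !mul2E /frob mulrDl.
apply: lerD; exact: CS.
Qed.

Lemma opnorm_ge (A : 'M[C]_2) (v : 'cV[C]_2) : vnorm v = 1 -> vnorm (A *m v) <= opnorm A.
Proof.
move=> hv; apply: ub_le_sup; last by exists v.
exists (Num.sqrt (frob A)) => y [w /= hw <-].
rewrite vnormE ler_wsqrtr //.
have := bound_frob A w; by rewrite (vnorm1 w hw) mulr1.
Qed.

Definition e0 : 'cV[C]_2 := delta_mx 0 0.
Definition e1 : 'cV[C]_2 := delta_mx 1 0.

Lemma vnorm_e0 : vnorm e0 = 1.
Proof.
rewrite vnormE /e0 !mxE /=.
by rewrite /n2 /= expr1n expr0n /= !addr0 sqrtr1.
Qed.

Lemma opnorm_le (A : 'M[C]_2) (K : R) : 0 <= K ->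
  (forall w : 'cV[C]_2, n2 ((A *m w) 0 0) + n2 ((A *m w) 1 0) = K * (n2 (w 0 0) + n2 (w 1 0))) ->
  opnorm A <= Num.sqrt K.
Proof.
move=> hK h; apply: ge_sup.
  by exists (vnorm (A *m e0)); exists e0 => //; exact: vnorm_e0.
move=> y [w /= hw <-].
by rewrite vnormE h (vnorm1 w hw) mulr1.
Qed.

Lemma col_e0 (A : 'M[C]_2) : vnorm (A *m e0) = Num.sqrt (n2 (A 0 0) + n2 (A 1 0)).
Proof. by rewrite vnormE !mul2E /e0 !mxE /= !mulr1 !mulr0 !addr0. Qed.

Lemma col_e1 (A : 'M[C]_2) : vnorm (A *m e1) = Num.sqrt (n2 (A 0 1) + n2 (A 1 1)).
Proof. by rewrite vnormE !mul2E /e1 !mxE /= !mulr1 !mulr0 !add0r. Qed.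

Lemma vnorm_e1 : vnorm e1 = 1.
Proof.
rewrite vnormE /e1 !mxE /=.
by rewrite /n2 /= expr1n expr0n /= !addr0 add0r sqrtr1.
Qed.


Lemma n2C (x : C) : (n2 x)%:C = x^*%C * x.
Proof. by rewrite mulrC mulcJ. Qed.

Lemma param (A : 'M[C]_2) : unitary A ->
  [/\ A 1 1 = \det A * (A 0 0)^*%C, A 0 1 = - (\det A * (A 1 0)^*%C)
    & n2 (A 0 0) + n2 (A 1 0) = 1].
Proof.
move=> hA; have hA' := mulmx1C hA.
move/unitaryE: hA => [h1 h2 h3 h4].
split.
- apply/eqP; rewrite -subr_eq0; apply/eqP.
  have -> : A 1 1 - \det A * (A 0 0)^*%C = - (
     A 1 1 * (A 0 0 * (A 0 0)^*%C + A 0 1 * (A 0 1)^*%C - 1)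
     - A 0 1 * (A 1 0 * (A 0 0)^*%C + A 1 1 * (A 0 1)^*%C)) by rewrite det2; ring.
  by rewrite h1 h3 subrr mulr0 mulr0 subr0 oppr0.
- apply/eqP; rewrite -addr_eq0; apply/eqP.
  have -> : A 0 1 + \det A * (A 1 0)^*%C =
     A 1 1 * (A 0 0 * (A 1 0)^*%C + A 0 1 * (A 1 1)^*%C)
     - A 0 1 * (A 1 0 * (A 1 0)^*%C + A 1 1 * (A 1 1)^*%C - 1) by rewrite det2; ring.
  by rewrite h2 h4 subrr !mulr0 subr0.
- move/matrixP: hA' => /(_ 0 0); rewrite mul2E !adjE !mxE /= => h.
  apply: (@complexI R); rewrite rmorphD /= !n2C h.
  by [].
Qed.

Lemma mud (mu d : C) : n2 mu = 1 -> mu * mu * d = 1 -> mu * d = mu^*%C.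
Proof.
move=> h1 h2; have hmm := n2_one mu h1.
have : mu^*%C * (mu * mu * d) = (mu^*%C * mu) * (mu * d) by ring.
by rewrite h2 hmm mulr1 mul1r => <-.
Qed.

Lemma n2_expi (x : R) : n2 (expi x) = 1.
Proof. by rewrite /n2 /expi /= cos2Dsin2. Qed.

Lemma n2_norm (z : C) : `|z| = 1 -> n2 z = 1.
Proof.
rewrite normc_def => -[h].
have hp : 0 <= n2 z by exact: n2_ge0.
by rewrite -(sqr_sqrtr hp) /n2 h expr1n.
Qed.

End S.

Arguments ctP_gen {R}.
Arguments n2 {R}.
Arguments e0 {R}.
Arguments e1 {R}.
Arguments param {R}.
Arguments n2_expi {R}.
Arguments n2_norm {R}.
Arguments key {R}.
Arguments mud {R}.
Arguments opnorm_le {R}.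
Arguments opnorm_ge {R}.
Arguments col_e0 {R}.
Arguments col_e1 {R}.
Arguments vnorm_e0 {R}.
Arguments vnorm_e1 {R}.
Arguments n2_ge0 {R}.
Arguments n2N {R}.
Arguments n2_special {R}.
Arguments cB {R}.
Arguments cM {R}.
Arguments expi_norm {R}.
Arguments expiD {R}.
Arguments expi0 {R}.
Arguments expi_pi {R}.

Local Close Scope complex_scope.

Theorem lemma7p18 (R : realType) (eps : R) (Rm U : 'M[R[i]]_2) :
  0 < eps -> unitary Rm -> \det Rm = 1 -> clifford_T U ->
  ((exists lam : R[i], `|lam| = 1 /\ opnorm (Rm - lam *: U) <= eps) <->
   (exists n : int, opnorm (Rm - expi (n%:~R * pi / 8) *: U) <= eps)).
Proof.
move=> heps uR dR hU; split; last first.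
  by move=> [n hn]; exists (expi (n%:~R * pi / 8)); split => //; exact: expi_norm.
move=> [lam [hlam hA]].
have [uU [k dU]] := ctP_gen U hU.
have [R11 R01 hab] := param Rm uR.
have [U11 U01 hpq] := param U uU.
rewrite dR mul1r in R11.
have {}R01 : Rm 0 1 = - (Rm 1 0)^*%C by rewrite R01 dR mul1r.
set a := Rm 0 0 in R11 R01 hab *; set b := Rm 1 0 in R11 R01 hab *.
set p := U 0 0 in U11 U01 hpq *; set q := U 1 0 in U11 U01 hpq *.
set d := \det U in U11 U01 dU.
pose mu0 : R[i] := expi ((- k)%:~R * pi / 8).
have hm : n2 mu0 = 1 by exact: n2_expi.
have hd : mu0 * mu0 * d = 1.
  rewrite /mu0 dU !expiD -expi0; congr expi.
  by first [rewrite mulrNz | rewrite rmorphN | rewrite (intrN k)]; field.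
have hl := n2_norm lam hlam.
have [mu hmu hineq] := key a b p q lam mu0 d hab hpq hl hm hd.
have hmu2 : mu * mu * d = 1 by case: hmu => ->; rewrite ?mulrNN.
have hmu1 : n2 mu = 1 by case: hmu => ->; rewrite ?n2N.
have hmd := mud mu d hmu1 hmu2.
have hB : opnorm (Rm - mu *: U) <= Num.sqrt (n2 (a - mu * p) + n2 (b - mu * q)).
  apply: opnorm_le; first by rewrite addr_ge0 ?n2_ge0.
  move=> w; rewrite !mul2E !mxE -/a -/b -/p -/q R11 R01 U11 U01.
  have -> : - b^*%C - mu * - (d * q^*%C) = - (b - mu * q)^*%C.
    by rewrite cB cM -hmd; ring.
  have -> : a^*%C - mu * (d * p^*%C) = (a - mu * p)^*%C.
    by rewrite cB cM -hmd; ring.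
  exact: n2_special.
set A := Rm - lam *: U.
have hc1 : Num.sqrt (n2 (a - lam * p) + n2 (b - lam * q)) <= eps.
  apply: le_trans hA; rewrite -/A.
  have := opnorm_ge A e0 vnorm_e0; rewrite col_e0 /A !mxE -/a -/b -/p -/q.
  by [].
have hc2 : Num.sqrt (n2 (- b^*%C + (lam * d) * q^*%C) + n2 (a^*%C - (lam * d) * p^*%C)) <= eps.
  apply: le_trans hA; rewrite -/A.
  have := opnorm_ge A e1 vnorm_e1; rewrite col_e1 /A !mxE R11 R01 U11 U01.
  have -> : - b^*%C - lam * - (d * q^*%C) = - b^*%C + (lam * d) * q^*%C by ring.
  have -> : a^*%C - lam * (d * p^*%C) = a^*%C - (lam * d) * p^*%C by ring.
  by [].
have hfin : opnorm (Rm - mu *: U) <= eps.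
  apply: le_trans hB _.
  set c0 := n2 (a - mu * p) + n2 (b - mu * q) in hineq *.
  set c1 := n2 (a - lam * p) + n2 (b - lam * q) in hineq hc1.
  set c2 := n2 (- b^*%C + (lam * d) * q^*%C) + n2 (a^*%C - (lam * d) * p^*%C) in hineq hc2.
  have [h|h] := lerP c0 c1.
    by apply: le_trans hc1; rewrite ler_wsqrtr.
  apply: le_trans hc2; rewrite ler_wsqrtr //; lra.
case: hmu => emu.
  by exists (- k); rewrite -/mu0 -emu.
exists (- k + 8).
suff -> : expi ((- k + 8)%:~R * pi / 8) = mu by [].
rewrite emu.
have -> : (- k + 8)%:~R * pi / 8 = (- k)%:~R * pi / 8 + pi :> R.
  by first [rewrite intrD | rewrite rmorphD]; field.
by rewrite -expiD expi_pi mulrN1.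
Qed.
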